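(* Let $p\geq 1$, let $\boldsymbol \Omega$ be a $p \times p$ positive definite matrix and let $0 < c < 1/2$. Let $\boldsymbol \beta$ have the structured normal-gamma (SNG) prior with parameters $c, \boldsymbol \Omega$, with marginal density $$p(\boldsymbol b \mid c, \boldsymbol \Omega) = \int_{(0,\infty)^p} \Big(\prod_{i=1}^p \frac{1}{s_i}\, g_c(s_i)\Big)\, \phi_{\boldsymbol \Omega}(\boldsymbol b / \boldsymbol s)\, d\boldsymbol s \in [0,+\infty],$$ where $\phi_{\boldsymbol \Omega}$ is the $\text{normal}(\boldsymbol 0, \boldsymbol \Omega)$ density, $\boldsymbol b/\boldsymbol s$ is elementwise division, and $g_c$ is the density of $s_i = \sqrt{s_i^2}$ when $s_i^2 \sim \text{gamma}(\text{shape } c, \text{rate } c)$, i.e. $g_c(s) \propto s^{2c-1} e^{-c s^2}$ on $(0,\infty)$. If $\boldsymbol b \in \mathbb{R}^p$ satisfies $b_j = 0$ for some $j \in \{1, \dots, p\}$, then $p(\boldsymbol b \mid c, \boldsymbol \Omega) = +\infty$.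
   Context: The SNG prior is the distribution of $\boldsymbol \beta = \boldsymbol s \circ \boldsymbol z$ (elementwise product), where $\boldsymbol z \sim \text{normal}(\boldsymbol 0, \boldsymbol \Omega)$ is independent of $\boldsymbol s$, and $s_1^2,\dots,s_p^2$ are i.i.d. gamma with shape $c$ and rate $c$ (so $\mathbb{E}[s_j^2]=1$), $s_j>0$. The displayed integral is the marginal (joint) prior density of $\boldsymbol \beta$ at $\boldsymbol b$, allowed to equal $+\infty$. *)

(* Defs.v *)
From HB Require Import structures.
From mathcomp Require Import all_boot all_order all_algebra.
From mathcomp Require Import all_classical all_reals all_analysis.
Set Implicit Arguments. Unset Strict Implicit. Unset Printing Implicit Defensive.
Import Order.TTheory GRing.Theory Num.Theory.
Import numFieldNormedType.Exports.
Local Open Scope classical_set_scope.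
Local Open Scope ring_scope.

Section SNG.
Variable R : realType.

Definition Gamma_fun (c : R) : R :=
  fine (\int[@lebesgue_measure R]_(x in `]0%R, +oo[) ((x `^ (c - 1)) * expR (- x))%:E)%E.

(* density of s = sqrt(s2), s2 ~ gamma(shape c, rate c), on (0, oo):
   g_c(s) = 2 c^c / Gamma(c) * s^(2c-1) * exp(-c s^2) *)
Definition g_dens (c s : R) : R :=
  (2 * c `^ c / Gamma_fun c) * (s `^ (2 * c - 1)) * expR (- (c * s ^+ 2)).

Definition posdef (p : nat) (Om : 'M[R]_p) : Prop :=
  Om^T = Om /\ forall x : 'rV[R]_p, x != 0 -> 0 < (x *m Om *m x^T) 0 0.

Definition normal_dens (p : nat) (Om : 'M[R]_p) (x : 'rV[R]_p) : R :=
  (Num.sqrt ((2 * pi) ^+ p * \det Om))^-1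
  * expR (- ((x *m invmx Om *m x^T) 0 0) / 2).

Definition upd (s : nat -> R) (n : nat) (t : R) : nat -> R :=
  fun k => if k == n then t else s k.

(* iterated Lebesgue integral over (0,oo)^n of a function of the first n
   coordinates; for non-negative measurable integrands this equals the
   integral over (0,oo)^n w.r.t. n-dimensional Lebesgue measure (Tonelli). *)
Fixpoint iint_pos (n : nat) (F : (nat -> R) -> \bar R) : \bar R :=
  match n with
  | O => F (fun _ => 0)
  | n'.+1 => iint_pos n' (fun s =>
      (\int[@lebesgue_measure R]_(t in `]0%R, +oo[) F (upd s n' t))%E)
  end.

Definition sng_density (p : nat) (c : R) (Om : 'M[R]_p) (b : 'rV[R]_p) : \bar R :=
  iint_pos p (fun s =>
    ((\prod_(i < p) ((s i)^-1 * g_dens c (s i)))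
     * normal_dens Om (\row_(i < p) (b 0 i / s i)))%:E).

End SNG.

(* Main.v *)
Require Import Defs.
From HB Require Import structures.
From mathcomp Require Import all_boot all_order all_algebra.
From mathcomp Require Import all_classical all_reals all_analysis.
From mathcomp Require Import measurable_realfun.
From mathcomp Require Import ring lra.
Import Order.TTheory GRing.Theory Num.Theory.
Local Open Scope ring_scope.

Section Helpers.
Set Implicit Arguments.
Import numFieldNormedType.Exports.
Local Open Scope classical_set_scope.
Variable R : realType.
Local Notation mu := (@lebesgue_measure R).

Lemma le_int_nm (D : set R) (f g : R -> \bar R) :
  (forall x, D x -> (0 <= f x)%E) -> (forall x, D x -> (f x <= g x)%E) ->
  (\int[mu]_(x in D) f x <= \int[mu]_(x in D) g x)%E.
Proof.
move=> f0 fg.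
have g0 : forall x, D x -> (0 <= g x)%E by move=> x Dx; exact: le_trans (f0 _ Dx) (fg _ Dx).
rewrite (ge0_integralE mu f0) (ge0_integralE mu g0) /=.
apply: ereal_sup_le => _ [h /= hf <-]; exists h => //= x.
apply: le_trans (hf x) _; rewrite /patch; case: ifP => // /set_mem Dx.
exact: fg.
Qed.

Lemma powR_anti (t u x : R) : 0 < t -> t <= u -> x <= 0 -> u `^ x <= t `^ x.
Proof.
move=> t0 tu x0; rewrite /powR !gt_eqF ?(lt_le_trans t0 tu) // ler_expR.
by apply: ler_wnM2l => //; rewrite ler_ln // posrE (lt_le_trans t0 tu).
Qed.

Lemma ftc_pow (c a : R) : 0 < c -> 0 < a -> a < 1 ->
  (\int[mu]_(x in `[a, 1%R]) (x `^ (c - 1))%:E <= c^-1%:E)%E.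
Proof.
move=> c0 a0 a1.
pose F := fun y : R => c^-1 * y `^ c.
have dF (y : R) : 0 < y -> is_derive y 1 F (c^-1 * (c * y `^ (c - 1))).
  move=> y0; apply: is_deriveZ; exact: is_derive1_powR.
have cF (y : R) : 0 < y -> {for y, continuous F}.
  move=> y0; apply: differentiable_continuous; apply/derivable1_diffP.
  by have [] := dF y y0.
rewrite (@continuous_FTC2 _ _ F) //.
- rewrite /F powR1 mulr1 lee_fin lerBlDr lerDl.
  by apply: mulr_ge0; [rewrite invr_ge0 ltW|apply: powR_ge0].
- apply: derivable_within_continuous => y; rewrite in_itv /= => /andP[ay _].
  by apply: derivable_powR; rewrite in_itv /= andbT (lt_le_trans a0 ay).
- split.
  + move=> y; rewrite in_itv /= => /andP[ay _].
    by have [] := dF y (lt_trans a0 ay).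
  + exact/cvg_at_right_filter/cF.
  + exact/cvg_at_left_filter/cF.
- move=> y; rewrite in_itv /= => /andP[ay _].
  rewrite derive1E; have [_ ->] := dF y (lt_trans a0 ay).
  by rewrite mulrA mulVf ?mul1r // gt_eqF.
Qed.

Lemma int_pow01 (c : R) : 0 < c ->
  (\int[mu]_(x in `]0%R, +oo[) (x `^ (c - 1) * \1_(`]-oo, 1%R] : set R) x)%:E
     <= c^-1%:E)%E.
Proof.
move=> c0.
set D := (`]0%R, +oo[%classic : set R).
have mD : measurable D by exact: measurable_itv.
pose a (n : nat) : R := (n.+2%:R)^-1.
have a0 n : 0 < a n by rewrite /a invr_gt0.
have a1 n : a n < 1 by rewrite /a invf_lt1 // ltr1n.
have anti_a m n : (m <= n)%N -> a n <= a m.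
  by move=> mn; rewrite /a lef_pV2 ?posrE // ler_nat.
pose g : (R -> \bar R)^nat := fun n x => (x `^ (c - 1) * \1_(`[a n, 1%R] : set R) x)%:E.
have mg n : measurable_fun D (g n).
  apply/measurable_realfun.measurable_EFinP.
  apply: measurable_realfun.measurable_funM.
    exact: measurable_funTS (measurable_realfun.measurable_powR _).
  exact: measurable_realfun.measurable_indic.
have g0 n x : D x -> (0 <= g n x)%E.
  by move=> _; rewrite lee_fin; apply: mulr_ge0 => //; apply: powR_ge0.
have ndg x : D x -> {homo g^~ x : n m / (n <= m)%N >-> (n <= m)%E}.
  move=> _ m n mn; rewrite lee_fin; apply: ler_wpM2l; first exact: powR_ge0.
  rewrite !indicE; have [|] := boolP (x \in (`[a m, 1%R]%classic : set R)); last by rewrite ler0n.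
  rewrite !inE /= !in_itv /= => /andP[amx x1].
  by rewrite (_ : x \in _ = true) //; apply/mem_set; rewrite /= in_itv /= (le_trans (anti_a _ _ mn) amx) x1.
have glim x : D x -> limn (g^~ x) = (x `^ (c - 1) * \1_(`]-oo, 1%R] : set R) x)%:E.
  move=> Dx; have x0 : 0 < x by move: Dx; rewrite /D /= in_itv /= andbT.
  apply: lim_near_cst => //.
  have [x1|x1] := leP x 1.
    near=> n; rewrite /g !indicE.
    have -> : (x \in (`]-oo, 1%R]%classic : set R)) = true.
      by apply/mem_set; rewrite /= in_itv /= x1.
    have -> // : (x \in (`[a n, 1%R]%classic : set R)) = true.
    apply/mem_set; rewrite /= in_itv /= x1 andbT.
    have h1 : a n <= n.+1%:R^-1 by rewrite /a lef_pV2 ?posrE // ler_nat.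
    apply: le_trans h1 _; apply: ltW.
    near: n; exact: (near_infty_natSinv_lt (PosNum x0)).
  near=> n; rewrite /g !indicE.
  have -> // : (x \in (`]-oo, 1%R]%classic : set R)) = false.
    by apply/negbTE/negP => /set_mem /=; rewrite in_itv /= leNgt x1.
  have -> // : (x \in (`[a n, 1%R]%classic : set R)) = false.
    by apply/negbTE/negP => /set_mem /=; rewrite in_itv /= (leNgt x 1) x1 andbF.
have -> : (\int[mu]_(x in D) (x `^ (c - 1) * \1_(`]-oo, 1%R] : set R) x)%:E
    = \int[mu]_(x in D) limn (g^~ x))%E.
  by apply: eq_integral => x /set_mem Dx; rewrite glim.
rewrite (monotone_convergence mu mD mg g0 ndg).
apply: lime_le.
  apply: ereal_nondecreasing_is_cvgn => m n mn.
  apply: le_int_nm; first by move=> x Dx; exact: g0.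
  by move=> x Dx; exact: ndg.
near=> n.
have -> : (\int[mu]_(x in D) g n x = \int[mu]_(x in `[a n, 1%R]) (x `^ (c - 1))%:E)%E.
  rewrite -(@setIidr _ D `[a n, 1%R]); last first.
    move=> x /=; rewrite !in_itv /= => /andP[ax _].
    by rewrite /D /= in_itv /= andbT (lt_le_trans (a0 n) ax).
  rewrite integral_mkcondr; apply: eq_integral => x _.
  by rewrite /g /patch indicE; case: (x \in _); rewrite ?mulr1 ?mulr0.
exact: ftc_pow.
Unshelve. all: end_near.
Qed.

Lemma Gamma_gt0 (c : R) : 0 < c -> c <= 1 -> 0 < Gamma_fun c.
Proof.
move=> c0 c1; apply: fine_gt0.
set D := (`]0%R, +oo[%classic : set R).
have mD : measurable D by exact: measurable_itv.
have cm1 : c - 1 <= 0 by rewrite subr_le0.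
apply/andP; split.
- pose m : R := 2 `^ (c - 1) * expR (-2).
  have m0 : 0 < m by rewrite /m mulr_gt0 ?expR_gt0 // powR_gt0.
  pose A := (`[1%R, 2%R]%classic : set R).
  have mA : measurable A by exact: measurable_itv.
  apply: (@lt_le_trans _ _ (\int[mu]_(x in D) (m * \1_A x)%:E)%E); last first.
    apply: le_int_nm => x Dx; first by rewrite lee_fin mulr_ge0 // ltW.
    have x0 : 0 < x by move: Dx; rewrite /D /= in_itv /= andbT.
    rewrite lee_fin indicE; have [|] := boolP (x \in A); last first.
      by rewrite mulr0 mulr_ge0 ?expR_ge0 // powR_ge0.
    move=> /set_mem; rewrite /A /= in_itv /= => /andP[x1 x2].
    rewrite mulr1 /m; apply: ler_pM; [exact: powR_ge0|exact: expR_ge0| |].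
      exact: powR_anti.
    by rewrite ler_expR lerN2.
  under eq_integral do rewrite EFinM.
  rewrite ge0_integralZl_EFin //; last 2 first.
    by apply/measurable_EFinP; exact: measurable_indic.
    exact: ltW.
  rewrite integral_indic // setIidl; last first.
    move=> x; rewrite /A /D /= !in_itv /= => /andP[x1 _].
    by rewrite andbT (lt_le_trans ltr01 x1).
  change (0 < m%:E * mu A)%E.
  have -> : mu A = (2 - 1)%:E.
    by rewrite /A lebesgue_measure_itv /= lte_fin ltr1n.
  rewrite -EFinM lte_fin.
  by rewrite mulr_gt0 // subr_gt0 ltr1n.
- pose u1 (x : R) := x `^ (c - 1) * \1_(`]-oo, 1%R] : set R) x.
  apply: (@le_lt_trans _ _ (\int[mu]_(x in D) ((u1 x)%:E + (expR (- x))%:E))%E).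
    apply: le_int_nm => x Dx.
      by rewrite lee_fin mulr_ge0 ?expR_ge0 // powR_ge0.
    have x0 : 0 < x by move: Dx; rewrite /D /= in_itv /= andbT.
    rewrite -EFinD lee_fin /u1 indicE.
    have [x1|x1] := leP x 1.
      have -> : (x \in (`]-oo, 1%R]%classic : set R)) = true.
        by apply/mem_set; rewrite /= in_itv /= x1.
      rewrite mulr1; apply: ler_wpDr; first exact: expR_ge0.
      apply: ler_piMr; first exact: powR_ge0.
      by rewrite expR_le1 oppr_le0 ltW.
    have -> : (x \in (`]-oo, 1%R]%classic : set R)) = false.
      by apply/negbTE/negP => /set_mem /=; rewrite in_itv /= leNgt x1.
    rewrite mulr0 add0r; apply: ler_piMl; first exact: expR_ge0.
    have : x `^ (c - 1) <= 1 `^ (c - 1) by apply: powR_anti => //; apply: ltW.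
    by rewrite powR1.
  rewrite ge0_integralD //; last 3 first.
  - by move=> x _; rewrite lee_fin /u1 mulr_ge0 // powR_ge0.
  - apply/measurable_EFinP; apply: measurable_funM.
      exact: measurable_funTS (measurable_powR _).
    exact: measurable_indic.
  - apply/measurable_EFinP; apply: measurable_funTS.
    apply: measurableT_comp => //; exact: measurable_funN.
  apply: (@le_lt_trans _ _ (c^-1%:E + 1)%E); last by rewrite -EFinD ltry.
  apply: leeD; first exact: int_pow01.
  have -> : (\int[mu]_(x in D) (expR (- x))%:E = \int[mu]_(x in D) (exponential_pdf 1 x)%:E)%E.
    apply: eq_integral => x /set_mem; rewrite /D /= in_itv /= andbT => x0.
    by rewrite exponential_pdfE ?ltW // mul1r mulN1r.
  rewrite -(integral_exponential_pdf ltr01).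
  apply: ge0_subset_integral => //.
  - apply/measurable_EFinP; exact: measurable_exponential_pdf.
  - by move=> x _; rewrite lee_fin exponential_pdf_ge0.
Qed.

Lemma normal_lb p (Om : 'M[R]_p) (b x : 'rV[R]_p) :
  (forall i, `|x 0 i| <= `|b 0 i|) ->
  (Num.sqrt ((2 * pi) ^+ p * \det Om))^-1 *
    expR (- (\sum_k \sum_i `|b 0 i| * `|invmx Om i k| * `|b 0 k|) / 2)
  <= normal_dens Om x.
Proof.
move=> hx; rewrite /normal_dens; apply: ler_wpM2l; first by rewrite invr_ge0 sqrtr_ge0.
rewrite ler_expR !mulNr lerN2 ler_pM2r ?invr_gt0 //.
apply: le_trans (ler_norm _) _; rewrite !mxE.
apply: le_trans (ler_norm_sum _ _ _) _; apply: ler_sum => k _.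
rewrite mxE normrM -mulr_suml; apply: ler_pM => //.
apply: le_trans (ler_norm_sum _ _ _) _; apply: ler_sum => i _.
rewrite normrM; apply: ler_pM => //.
by rewrite mxE.
Qed.

Lemma ler_inv_pos (x y : R) : 0 < x -> x <= y -> y^-1 <= x^-1.
Proof. by move=> x0 xy; rewrite lef_pV2 // posrE (lt_le_trans x0 xy). Qed.

Lemma g_lb12 (c t : R) : 0 < c -> 2 * c - 1 <= 0 -> 0 <= Gamma_fun c -> 1 <= t <= 2 ->
  2^-1 * (2 * c `^ c / Gamma_fun c * 2 `^ (2 * c - 1) * expR (- (c * 2 ^+ 2)))
  <= t^-1 * g_dens c t.
Proof.
move=> c0 e0 G0 /andP[t1 t2]; have t0 : 0 < t by apply: lt_le_trans ltr01 t1.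
rewrite /g_dens; apply: ler_pM.
- by rewrite invr_ge0.
- by rewrite !mulr_ge0 ?expR_ge0 ?powR_ge0 ?invr_ge0.
- exact: ler_inv_pos.
apply: ler_pM.
- by rewrite !mulr_ge0 ?expR_ge0 ?powR_ge0 ?invr_ge0.
- exact: expR_ge0.
- apply: ler_pM => //; try by rewrite ?mulr_ge0 ?expR_ge0 ?powR_ge0 ?invr_ge0.
  exact: powR_anti.
rewrite ler_expR lerN2 ler_pM2l // expr2 expr2.
by apply: ler_pM => //; apply: ltW.
Qed.

Lemma g_lb0e (c t e : R) : 0 < c -> 2 * c - 1 <= 0 -> 0 <= Gamma_fun c -> e <= 1 ->
  0 < t <= e ->
  e^-1 * (2 * c `^ c / Gamma_fun c * e `^ (2 * c - 1) * expR (- c))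
  <= t^-1 * g_dens c t.
Proof.
move=> c0 e0 G0 e1 /andP[t0 te].
rewrite /g_dens; apply: ler_pM.
- by rewrite invr_ge0 (le_trans (ltW t0) te).
- by rewrite !mulr_ge0 ?expR_ge0 ?powR_ge0 ?invr_ge0.
- exact: ler_inv_pos.
apply: ler_pM.
- by rewrite !mulr_ge0 ?expR_ge0 ?powR_ge0 ?invr_ge0.
- exact: expR_ge0.
- apply: ler_pM => //; try by rewrite ?mulr_ge0 ?expR_ge0 ?powR_ge0 ?invr_ge0.
  exact: powR_anti.
rewrite ler_expR lerN2 -[leRHS]mulr1 ler_pM2l //.
by apply: exprn_ile1; [apply: ltW|apply: le_trans te e1].
Qed.

Lemma iint_ge0 n (F : (nat -> R) -> \bar R) :
  (forall s, (forall i, (i < n)%N -> 0 < s i) -> (0 <= F s)%E) ->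
  (0 <= iint_pos n F)%E.
Proof.
elim: n F => [|n IH] F HF /=; first by apply: HF.
apply: IH => s Hs; apply: integral_ge0 => t /= t0.
apply: HF => i; rewrite ltnS leq_eqVlt /upd => /orP[/eqP ->|lin].
  by rewrite eqxx; move: t0; rewrite in_itv /= andbT.
by rewrite (ltn_eqF lin); exact: Hs.
Qed.

Lemma iint_le n (F G : (nat -> R) -> \bar R) :
  (forall s, (forall i, (i < n)%N -> 0 < s i) -> (0 <= F s)%E && (F s <= G s)%E) ->
  (iint_pos n F <= iint_pos n G)%E.
Proof.
elim: n F G => [|n IH] F G HF /=; first by case/andP: (HF (fun=> 0) (fun i => ltac:(done))).
have Hup (s : nat -> R) (t : R) : (forall i, (i < n)%N -> 0 < s i) -> 0 < t ->
    forall i, (i < n.+1)%N -> 0 < upd s n t i.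
  move=> Hs t0 i; rewrite ltnS leq_eqVlt /upd => /orP[/eqP ->|lin].
    by rewrite eqxx.
  by rewrite (ltn_eqF lin); exact: Hs.
apply: IH => s Hs; apply/andP; split.
  apply: integral_ge0 => t /= t0; have t0' : 0 < t by move: t0; rewrite in_itv /= andbT.
  by have /andP[] := HF _ (Hup s t Hs t0').
apply: le_int_nm => t /= t0; have t0' : 0 < t by move: t0; rewrite in_itv /= andbT.
  by have /andP[] := HF _ (Hup s t Hs t0').
by have /andP[] := HF _ (Hup s t Hs t0').
Qed.

Lemma iint_prod (n : nat) (h : nat -> R -> R) (a : nat -> R) (K : R) :
  (forall i x, 0 <= h i x) -> (forall i, measurable_fun (`]0%R, +oo[ : set R) (h i)) ->
  (forall i, \int[mu]_(t in `]0%R, +oo[) (h i t)%:E = (a i)%:E)%E -> 0 <= K ->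
  iint_pos n (fun s => (K * \prod_(i < n) h i (s i))%:E) = (K * \prod_(i < n) a i)%:E.
Proof.
move=> h0 hm ha; elim: n K => [|n IH] K K0 /=; first by rewrite !big_ord0.
have an0 : 0 <= a n by rewrite -lee_fin -(ha n); apply: integral_ge0 => x _; rewrite lee_fin.
have -> : (fun s : nat -> R => (\int[mu]_(t in `]0%R, +oo[)
    (K * \prod_(i < n.+1) h i (upd s n t i))%:E)%E) =
    (fun s => ((K * a n) * \prod_(i < n) h i (s i))%:E).
  apply/funext => s.
  have E t : (K * \prod_(i < n.+1) h i (upd s n t i))%:E =
      ((K * \prod_(i < n) h i (s i))%:E * (h n t)%:E)%E.
    rewrite big_ord_recr /= /upd eqxx -EFinM mulrA; congr (_ * _ * _)%:E.
    by apply: eq_bigr => i _; rewrite /= (ltn_eqF (ltn_ord i)).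
  under eq_integral => t _ do rewrite E.
  rewrite ge0_integralZl_EFin //; last by apply: mulr_ge0 => //; apply: prodr_ge0.
  all: try (by rewrite ha -EFinM mulrAC); try (by move=> x _; rewrite lee_fin); try (exact/measurable_realfun.measurable_EFinP).
  exact: (measurable_realfun.measurable_EFinP _ (h n)).2 (hm n).
rewrite IH; last exact: mulr_ge0.
by rewrite big_ord_recr /= mulrA mulrAC -!mulrA.
Qed.

Lemma posdef_det_gt0 p (Om : 'M[R]_p) : posdef Om -> 0 < \det Om.
Proof.
move=> [_ Hpd].
pose Mt (t : R) : 'M[R]_p := t *: Om + (1 - t) *: 1%:M.
have Hq t : 0 <= t <= 1 -> \det (Mt t) != 0.
  move=> /andP[t0 t1]; apply/negP => /det0P [v v0 vM].
  have h1 := Hpd v v0.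
  have h2 : 0 < (v *m v^T) 0 0.
    have [i vi] : exists i, v 0 i != 0.
      apply/existsP; apply: contraNT v0 => /existsPn H.
      by apply/eqP/matrixP => a k; rewrite !mxE (ord1 a); apply/eqP/negPn/H.
    rewrite !mxE (bigD1 i) //= mxE ltr_pwDl //; first by rewrite lt0r mulf_neq0 //= -expr2 sqr_ge0.
    by apply: sumr_ge0 => k _; rewrite mxE -expr2 sqr_ge0.
  have : (v *m Mt t *m v^T) 0 0 = t * (v *m Om *m v^T) 0 0 + (1 - t) * (v *m v^T) 0 0.
    rewrite /Mt mulmxDr mulmxDl -!scalemxAr mulmx1 -!scalemxAl.
    by rewrite !mxE. 
  rewrite vM mul0mx mxE => /esym.
  move=> E; suff : 0 < t * (v *m Om *m v^T) 0 0 + (1 - t) * (v *m v^T) 0 0.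
    by rewrite -E ltxx.
  have [->|tp] := eqVneq t 0; first by rewrite mul0r add0r subr0 mul1r.
  have tpos : 0 < t by rewrite lt_neqAle eq_sym tp.
  apply: ltr_wpDr; first by apply: mulr_ge0; [rewrite subr_ge0|apply: ltW].
  exact: mulr_gt0.
pose A : 'M[{poly R}]_p := \matrix_(i, j) ('X * (Om i j)%:P + (1 - 'X) * (i == j)%:R).
have HA t : (\det A).[t] = \det (Mt t).
  rewrite -[_.[t]]/(horner_eval t (\det A)) -det_map_mx; congr (\det _).
  apply/matrixP => i j; rewrite !mxE /horner_eval.
  idtac.
  change (('X * (Om i j)%:P + (1 - 'X) * (i == j)%:R).[t] = t * Om i j + (1 - t) * (i == j)%:R); rewrite !hornerE; by case: (i == j); rewrite ?hornerE.
have H1 : \det (Mt 1) = \det Om by rewrite /Mt subrr scale0r addr0 scale1r.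
have H0 : \det (Mt 0) = 1 by rewrite /Mt subr0 scale0r add0r scale1r det1.
rewrite ltNge; apply/negP => hle.
have hiv : (- \det A).[0] <= 0 <= (- \det A).[1].
  by rewrite !hornerN HA H0 HA H1 oppr_le0 ler01 oppr_ge0 hle.
have [x /andP[x0 x1] rx] := poly_ivt ler01 hiv.
move: rx; rewrite /root hornerN oppr_eq0 HA => /eqP.
by apply/eqP/Hq; rewrite x0 x1.
Qed.

End Helpers.

Unset Implicit Arguments.

Theorem proposition2p2 (R : realType) (p : nat) (Om : 'M[R]_p) (c : R)
    (b : 'rV[R]_p) :
  (1 <= p)%N -> posdef Om -> 0 < c -> c < 1 / 2 ->
  (exists j : 'I_p, b 0 j = 0) ->
  sng_density c Om b = +oo%E.
Proof.
move=> p1 Hpd c0 c12 [j bj].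
have c1 : c <= 1 by lra.
have e0 : 2 * c - 1 <= 0 by lra.
have e0' : 2 * c - 1 < 0 by lra.
have G0 := @Gamma_gt0 R c c0 c1.
set C := 2 * c `^ c / Gamma_fun c.
have C0 : 0 < C by rewrite /C mulr_gt0 ?invr_gt0 // mulr_gt0 // powR_gt0.
set Q := \sum_k \sum_i `|b 0 i| * `|invmx Om i k| * `|b 0 k|.
set N0 := (Num.sqrt ((2 * pi) ^+ p * \det Om))^-1 * expR (- Q / 2).
have N00 : 0 < N0.
  rewrite /N0 mulr_gt0 ?expR_gt0 // invr_gt0 sqrtr_gt0 mulr_gt0 //.
    by rewrite exprn_gt0 // mulr_gt0 // pi_gt0.
  exact: posdef_det_gt0.
set A := 2^-1 * (C * 2 `^ (2 * c - 1) * expR (- (c * 2 ^+ 2))).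
have A0 : 0 < A by rewrite /A !mulr_gt0 ?invr_gt0 ?expR_gt0 ?powR_gt0.
pose B (e : R) := e^-1 * (C * e `^ (2 * c - 1) * expR (- c)).
have B0 e : 0 < e -> 0 < B e.
  by move=> e0''; rewrite /B !mulr_gt0 ?invr_gt0 ?expR_gt0 ?powR_gt0.
pose h (e : R) (i : nat) (t : R) := if i == j then B e * \1_(`]0%R, e]%classic : set R) t
  else A * \1_(`[1%R, 2%R]%classic : set R) t.
pose a (e : R) (i : nat) := if i == j then B e * e else A.
have key e : 0 < e -> e <= 1 -> ((N0 * \prod_(i < p) a e i)%:E <= sng_density c Om b)%E.
  move=> ep e1.
  rewrite -(@iint_prod R p (h e) (a e) N0); last 4 first.
  - move=> i x; rewrite /h; case: ifP => _; apply: mulr_ge0 => //.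
      exact: ltW (B0 e ep).
    exact: ltW.
  - move=> i; rewrite /h; case: (i == j).
      apply: (@measurable_funM _ _ _ _ (fun=> B e) (\1_(`]0%R, e]%classic : set R))) => //; exact: measurable_indic.
    apply: (@measurable_funM _ _ _ _ (fun=> A) (\1_(`[1%R, 2%R]%classic : set R))) => //; exact: measurable_indic.
  - move=> i; rewrite /h /a; case: (i == j).
    + under eq_integral do rewrite EFinM.
      rewrite ge0_integralZl_EFin //; last 2 first.
        by apply/measurable_EFinP; exact: measurable_indic.
        exact: ltW (B0 e ep).
      rewrite integral_indic // setIidl; last first.
        by move=> x /=; rewrite !in_itv /= andbT => /andP[].
      change ((B e)%:E * (@lebesgue_measure R) (`]0%R, e]%classic : set R) = (B e * e)%:E)%E.
      rewrite lebesgue_measure_itv /= lte_fin ep. by rewrite oppr0 adde0 -EFinM.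
    + under eq_integral do rewrite EFinM.
      rewrite ge0_integralZl_EFin //; last 2 first.
        by apply/measurable_EFinP; exact: measurable_indic.
        exact: ltW.
      rewrite integral_indic // setIidl; last first.
        move=> x /=; rewrite !in_itv /= => /andP[x1 _].
        by rewrite andbT (lt_le_trans ltr01 x1).
      change (A%:E * (@lebesgue_measure R) (`[1%R, 2%R]%classic : set R) = A%:E)%E.
      rewrite lebesgue_measure_itv /= lte_fin ltr1n -EFinD -EFinM; congr (_%:E).
      have -> : (2 - 1 : R) = 1 by lra.
      by rewrite mulr1.
  - exact: ltW.
  apply: iint_le => s Hs.
  have r0 i : (i < p)%N -> 0 <= (s i)^-1 * g_dens c (s i).
    move=> ip; have si := Hs i ip.
    by rewrite /g_dens !mulr_ge0 ?invr_ge0 ?expR_ge0 ?powR_ge0 // ltW.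
  have hb i : (i < p)%N -> 0 <= h e i (s i) <= (s i)^-1 * g_dens c (s i).
    move=> ip; have si := Hs i ip; rewrite /h; case: ifP => _; rewrite indicE.
    + have [Hin|_] := boolP (s i \in (`]0%R, e]%classic : set R)).
        rewrite mulr1 (ltW (B0 e ep)) /=; apply: g_lb0e => //; first exact: ltW.
        by move/set_mem: Hin; rewrite /= in_itv /=.
      by rewrite mulr0 lexx /=; exact: r0.
    + have [Hin|_] := boolP (s i \in (`[1%R, 2%R]%classic : set R)).
        rewrite mulr1 (ltW A0) /=; apply: g_lb12 => //; first exact: ltW.
        by move/set_mem: Hin; rewrite /= in_itv /=.
      by rewrite mulr0 lexx /=; exact: r0.
  have nd0 : 0 <= normal_dens Om (\row_(i < p) (b 0 i / s i)).
    by rewrite /normal_dens mulr_ge0 ?invr_ge0 ?sqrtr_ge0 ?expR_ge0.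
  apply/andP; split.
    rewrite lee_fin mulr_ge0 // ?(ltW N00) //; apply: prodr_ge0 => i _.
    by case/andP: (hb i (ltn_ord i)).
  rewrite lee_fin.
  case: (boolP [forall i : 'I_p, (i != j) ==> (1 <= s i <= 2)]) => [/forallP Hall|/forallPn [i]].
    rewrite mulrC; apply: ler_pM.
    - by apply: prodr_ge0 => i _; case/andP: (hb i (ltn_ord i)).
    - exact: ltW.
    - by apply: ler_prod => i _; exact: hb i (ltn_ord i).
    apply: normal_lb => i; rewrite mxE.
    have [->|ij] := eqVneq i j; first by rewrite bj mul0r normr0.
    have /andP[s1 _] := implyP (Hall i) ij.
    have si := Hs i (ltn_ord i).
    rewrite normrM normfV (gtr0_norm si) ler_pdivrMr // ler_peMr //.
  rewrite negb_imply => /andP[ij si].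
  rewrite (bigD1 i) //= /h.
  have -> : (nat_of_ord i == nat_of_ord j) = false by apply/negbTE.
  rewrite indicE.
  have -> : (s i \in (`[1%R, 2%R]%classic : set R)) = false.
    by apply/negbTE/negP => /set_mem /=; rewrite in_itv /=; exact/negP.
  rewrite mulr0 mul0r mulr0; apply: mulr_ge0 => //.
  by apply: prodr_ge0 => k _; exact: r0 k (ltn_ord k).
set P := \prod_(i < p | i != j) A.
have P0 : 0 < P by apply: prodr_gt0.
have aval e : 0 < e -> \prod_(i < p) a e i = C * e `^ (2 * c - 1) * expR (- c) * P.
  move=> ep; rewrite (bigD1 j) //= /a eqxx.
  rewrite (eq_bigr (fun => A)); last first.
    by move=> i ij; have -> : (nat_of_ord i == nat_of_ord j) = false by apply/negbTE.
  by rewrite /B /P; congr (_ * _); rewrite mulrAC mulVf ?mul1r // gt_eqF.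
set K := N0 * C * expR (- c) * P.
have K0 : 0 < K.
  have E0 := expR_gt0 (- c); rewrite /K.
  apply: mulr_gt0 => //; apply: mulr_gt0 => //; exact: mulr_gt0.
have HX (M : R) : 0 < M -> (M%:E <= sng_density c Om b)%E.
  move=> M0.
  set Y := Num.max 1 (M / K).
  have Y1 : 1 <= Y by rewrite /Y le_max; apply/orP; left.
  have Y0 : 0 < Y by apply: lt_le_trans ltr01 Y1.
  set e := Y `^ ((2 * c - 1)^-1).
  have ep : 0 < e by rewrite /e powR_gt0.
  have e1 : e <= 1.
    have := @powR_anti R 1 Y ((2 * c - 1)^-1) ltr01 Y1.
    by rewrite powR1; apply; rewrite invr_le0.
  have eY : e `^ (2 * c - 1) = Y.
    by rewrite /e -powRrM mulVf ?lt_eqF // powRr1 // ltW.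
  apply: le_trans (key e ep e1); rewrite aval // eY lee_fin.
  have -> : N0 * (C * Y * expR (- c) * P) = K * Y by rewrite /K; ring.
  rewrite -ler_pdivrMl //.
  by rewrite /Y le_max mulrC lexx orbT.
move: HX; case: (sng_density c Om b) => [r| |] // HX.
  have h2 := normr_ge0 r; have h1 := ler_norm r.
  have hp : 0 < `|r| + 1 by lra.
  move: (HX _ hp); rewrite lee_fin => h3; exfalso; clear -h1 h3; lra.
by have := HX 1 ltr01.
Qed.
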